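(* Let $S$ be any set, $m\ge 2$, $s:I_m\to S$, and $s'=\tau_{m-1}s$. If $(s,s')$ is a special pair, then $s=s'$.
   Context: $\mathcal{S}_m$ acts on sequences $s:I_m\to S$ by $\sigma s=s\circ\sigma^{-1}$. For $i\in I_m$, $\tau_i(j)=i+1-j$ for $j\le i$ and $\tau_i(j)=j$ for $j>i$; thus $(\tau_{m-1}s)(i)=s(m-i)$ for $i<m$ and $(\tau_{m-1}s)(m)=s(m)$. $(\mathrm{rev}\,s)(i)=s(m+1-i)$. An element $A\in\mathrm{Im}\,s$ is direct for $(s,s')$ if $s'(i)=A$ for all $i\in s^{-1}(A)$, and reverse for $(s,s')$ if $(\mathrm{rev}\,s')(i)=A$ for all $i\in s^{-1}(A)$. The pair $(s,s')$ is special if every $A\in\mathrm{Im}\,s$ is direct or reverse for $(s,s')$. *)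

(* Defs.v *)
From mathcomp Require Import all_boot all_fingroup.
Set Implicit Arguments. Unset Strict Implicit. Unset Printing Implicit Defensive.

(* Convention: the paper's index set I_m = {1,...,m} is represented by 'I_m
   = {0,...,m-1}; the paper's index p corresponds to the ordinal of value p-1. *)

(* The paper's tau_k (k a 1-based index in I_m): tau_k(p) = k+1-p for p <= k,
   tau_k(p) = p for p > k.  In 0-based terms: j |-> k-1-j for j < k.
   (For k > m, which never occurs in the paper, we let it be the identity.) *)
Definition tau_fun (m k : nat) (j : 'I_m) : 'I_m :=
  if (j < k) && (k <= m) then insubd j (k.-1 - j) else j.

Lemma tau_funK m k : involutive (@tau_fun m k).
Proof.
move=> j; rewrite /tau_fun.
have [/andP [jk km] | nj] := boolP ((j < k) && (k <= m)); last by rewrite (negbTE nj).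
have k0 : 0 < k by apply: leq_ltn_trans jk.
have lt2 : k.-1 - j < k by rewrite (leq_ltn_trans (leq_subr _ _)) // prednK.
have lt1 : k.-1 - j < m by apply: leq_trans lt2 km.
have v : nat_of_ord (insubd j (k.-1 - j) : 'I_m) = k.-1 - j by rewrite val_insubd lt1.
rewrite v lt2 km /=; apply: val_inj; rewrite val_insubd subKn ?ltn_ord //.
by rewrite -ltnS prednK.
Qed.

Definition tau (m k : nat) : {perm 'I_m} := perm (can_inj (@tau_funK m k)).

Definition sm_act (S : Type) (m : nat) (sigma : {perm 'I_m}) (s : 'I_m -> S) : 'I_m -> S :=
  fun i => s ((sigma^-1)%g i).

Definition rev_seq (S : Type) (m : nat) (s : 'I_m -> S) : 'I_m -> S :=
  fun i => s (rev_ord i).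

Definition in_image (S : Type) (m : nat) (s : 'I_m -> S) (A : S) : Prop :=
  exists i, s i = A.

Definition direct (S : Type) (m : nat) (s s' : 'I_m -> S) (A : S) : Prop :=
  forall i, s i = A -> s' i = A.

Definition reverse (S : Type) (m : nat) (s s' : 'I_m -> S) (A : S) : Prop :=
  forall i, s i = A -> rev_seq s' i = A.

Definition special (S : Type) (m : nat) (s s' : 'I_m -> S) : Prop :=
  forall A, in_image s A -> direct s s' A \/ reverse s s' A.

(* Main.v *)
Require Import Defs.
From mathcomp Require Import all_boot all_fingroup.
From mathcomp Require Import zify.
From Stdlib Require Import FunctionalExtensionality.

Lemma tau_inv (m k : nat) (i : 'I_m) : ((tau m k)^-1)%g i = @tau_fun m k i.
Proof.
have h : @tau_fun m k (((tau m k)^-1)%g i) = i.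
  by rewrite -[@tau_fun m k _](permE (can_inj (@tau_funK m k))) -/(tau m k) permKV.
by rewrite -{2}h tau_funK.
Qed.

Lemma tau_val (m' : nat) (j : 'I_m'.+2) :
  val (@tau_fun m'.+2 m'.+1 j) = if j < m'.+1 then m' - j else j.
Proof.
rewrite /tau_fun leqnSn andbT; case: ifP => // hj.
rewrite val_insubd /=; case: ifP => //; lia.
Qed.

Theorem mainTheorem19 (S : Type) (m : nat) (hm : 2 <= m) (s : 'I_m -> S) :
  special s (sm_act (tau m m.-1) s) -> s = sm_act (tau m m.-1) s.
Proof.
case: m hm s => [|[|m']] // _ s Hsp.
apply: functional_extensionality => i.
have [D|R] := Hsp (s i) (ex_intro _ i erefl).
  by rewrite (D i erefl).
rewrite /reverse /rev_seq /sm_act /= in R.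
set A := s i in R *.
have step : forall j : 'I_m'.+2, s j = A -> s (inord j.-1) = A /\ (j = 0 :> nat -> s ord_max = A).
  move=> j hj; have := R j hj; rewrite tau_inv => h; split.
  - case: (posnP j) => j0.
      rewrite -hj; congr (s _); apply: val_inj; rewrite /= inordK ?j0 //; lia.
    rewrite -h; congr (s _); apply: val_inj; move: (ltn_ord j) => ltj; rewrite tau_val /= inordK; last lia. case: ifP; lia.
  - move=> j0; rewrite -h; congr (s _); apply: val_inj; rewrite tau_val /=; move: (ltn_ord j) => ltj; case: ifP; lia.
have all1 : forall k, k <= i -> s (inord (i - k)) = A.
  elim=> [|k IH] hk; first by rewrite subn0 inord_val.
  have := (step _ (IH (ltnW hk))).1; move: (ltn_ord i) => lti; rewrite inordK; last lia.
  by have -> : (i - k).-1 = i - k.+1 by lia.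
have s0 : s ord_max = A.
  apply: (step (inord 0) _).2; last by rewrite inordK.
  by have := all1 i (leqnn _); rewrite subnn.
have all2 : forall k, k <= m'.+1 -> s (inord (m'.+1 - k)) = A.
  elim=> [|k IH] hk.
    by rewrite subn0 -s0; congr (s _); apply: val_inj; rewrite /= inordK.
  have := (step _ (IH (ltnW hk))).1; move: (ltn_ord i) => lti; rewrite inordK; last lia.
  by have -> : (m'.+1 - k).-1 = m'.+1 - k.+1 by lia.
have hall : forall j : 'I_m'.+2, s j = A.
  move=> j; have := all2 (m'.+1 - j) (leq_subr _ _).
  have -> : m'.+1 - (m'.+1 - j) = j by have := ltn_ord j; lia.
  by rewrite inord_val.
by rewrite /sm_act hall.
Qed.
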